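(* Consider the exact value iteration $P_{i+1}=\mathcal R(P_i,S)$ with $P_0\in\mathbb S^n_+$. Fix $\theta\in(\rho(A^* ),1)$ and a constant $C_\theta\ge1$ such that $\|(A^* )^i\|_2\le C_\theta\theta^i$ for all $i\ge0$. Let $\nu=\|A^*\|_2^2\,\|BR^{-1}B^\top\|_2$, assume $\nu>0$, and set $\delta_\theta=\dfrac{\theta^2(1-\theta^2)}{4\nu C_\theta^4}$. If $\|P_0-P^*\|_2\le\delta_\theta$, then for all $i\in\mathbb Z_+$, $$\|P_i-P^*\|_2\le 2C_\theta^2\,\theta^{2i}\,\|P_0-P^*\|_2.$$
   Context: Let $n,m\ge 1$, $A\in\mathbb R^{n\times n}$, $B\in\mathbb R^{n\times m}$, $S\in\mathbb S^n_{++}$, $R\in\mathbb S^m_{++}$, with $(A,B)$ stabilizable. $\mathbb S^n$, $\mathbb S^n_+$, $\mathbb S^n_{++}$ denote symmetric, positive semidefinite, positive definite $n\times n$ matrices; $\|\cdot\|_2$ spectral norm; $\rho$ spectral radius. For $P\in\mathbb S^n_+$ and $S'\in\mathbb S^n$, $\mathcal R(P,S')=A^\top PA-A^\top PB(R+B^\top PB)^{-1}B^\top PA+S'$. $P^*\in\mathbb S^n_{++}$ is the unique positive definite solution of $P=\mathcal R(P,S)$, $K^*=(R+B^\top P^*B)^{-1}B^\top P^*A$, $A^*=A-BK^*$, with $\rho(A^* )<1$ (so such $C_\theta$ exists). *)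

(* Defs.v *)
From HB Require Import structures.
From mathcomp Require Import all_boot all_order all_algebra.
From mathcomp Require Import all_classical all_reals.
Set Implicit Arguments. Unset Strict Implicit. Unset Printing Implicit Defensive.
Import Order.TTheory GRing.Theory Num.Theory.
Local Open Scope ring_scope.
Local Open Scope classical_set_scope.

Section Defs.
Variable R : realType.

Definition vnorm2 (k : nat) (x : 'cV[R]_k) : R :=
  Num.sqrt (\sum_(i < k) x i 0 ^+ 2).

Definition specnorm (p q : nat) (M : 'M[R]_(p, q)) : R :=
  sup [set e : R | exists x : 'cV[R]_q, x != 0 /\ e = vnorm2 (M *m x) / vnorm2 x].

(* a + i b is a (complex) eigenvalue of the real matrix M: there is a nonzero
   complex vector u + i v with M (u + i v) = (a + i b)(u + i v), written in
   real coordinates. *)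
Definition is_complex_eigenvalue (k : nat) (M : 'M[R]_k) (a b : R) : Prop :=
  exists u v : 'cV[R]_k, (u != 0 \/ v != 0) /\
    M *m u = a *: u - b *: v /\ M *m v = b *: u + a *: v.

Definition specrad (k : nat) (M : 'M[R]_k) : R :=
  sup [set r : R | exists a b : R, is_complex_eigenvalue M a b /\
                   r = Num.sqrt (a ^+ 2 + b ^+ 2)].

Definition symmetric (k : nat) (M : 'M[R]_k) : Prop := M^T = M.
Definition psd (k : nat) (M : 'M[R]_k) : Prop :=
  symmetric M /\ forall x : 'cV[R]_k, 0 <= (x^T *m M *m x) 0 0.
Definition pd (k : nat) (M : 'M[R]_k) : Prop :=
  symmetric M /\ forall x : 'cV[R]_k, x != 0 -> 0 < (x^T *m M *m x) 0 0.

Definition stabilizable (n m : nat) (A : 'M[R]_n) (B : 'M[R]_(n, m)) : Prop :=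
  exists K : 'M[R]_(m, n), specrad (A - B *m K) < 1.

Definition riccati (n m : nat) (A : 'M[R]_n) (B : 'M[R]_(n, m)) (Rm : 'M[R]_m)
  (P S' : 'M[R]_n) : 'M[R]_n :=
  A^T *m P *m A - A^T *m P *m B *m invmx (Rm + B^T *m P *m B) *m B^T *m P *m A + S'.

Definition value_iter (n m : nat) (A : 'M[R]_n) (B : 'M[R]_(n, m)) (Rm : 'M[R]_m)
  (S P0 : 'M[R]_n) (i : nat) : 'M[R]_n :=
  iter i (fun P => riccati A B Rm P S) P0.

Definition gain (n m : nat) (A : 'M[R]_n) (B : 'M[R]_(n, m)) (Rm : 'M[R]_m)
  (P : 'M[R]_n) : 'M[R]_(m, n) :=
  invmx (Rm + B^T *m P *m B) *m B^T *m P *m A.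

End Defs.

(* Main.v *)
Require Import Defs.
From HB Require Import structures.
From mathcomp Require Import all_boot all_order all_algebra.
From mathcomp Require Import all_classical all_reals.
From mathcomp Require Import ring lra zify.
Import Order.TTheory GRing.Theory Num.Theory.
Local Open Scope ring_scope.
Set Implicit Arguments. Unset Strict Implicit. Unset Printing Implicit Defensive.

Section Aux.
Variable R : realType.
Local Open Scope classical_set_scope.

Lemma gen_cs (a b c : R) : 0 <= a -> 0 <= c ->
  (forall t, 0 < t -> 2 * t * b <= t ^+ 2 * a + c) -> b <= Num.sqrt a * Num.sqrt c.
Proof.
move=> a0 c0 H.
have [b0|bpos] := lerP b 0.
  by apply: le_trans b0 _; rewrite mulr_ge0 ?sqrtr_ge0.
have [az|apos] := eqVneq a 0.
  rewrite az in H *.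
  have cb : 0 <= c / b by rewrite divr_ge0 // ltW.
  have := H (c / b + 1) (ltr_wpDl cb ltr01).
  have e : (c / b + 1) * b = c + b by rewrite mulrDl divfK ?gt_eqF // mul1r.
  rewrite -mulrA e mulr0 add0r; lra.

have {}apos : 0 < a by rewrite lt_neqAle eq_sym apos a0.
have [cz|cpos] := eqVneq c 0.
  rewrite cz in H *.
  have := H (b / a) (divr_gt0 bpos apos).
  have e : (b / a) ^+ 2 * a = b / a * b.
    by rewrite expr2 -mulrA divfK ?gt_eqF.
  rewrite addr0 e => h.
  have ba : 0 < b / a by rewrite divr_gt0.
  nra.
have {}cpos : 0 < c by rewrite lt_neqAle eq_sym cpos c0.
have sa : 0 < Num.sqrt a by rewrite sqrtr_gt0.
have sc : 0 < Num.sqrt c by rewrite sqrtr_gt0.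
have ea : Num.sqrt a ^+ 2 = a by rewrite sqr_sqrtr.
have ec : Num.sqrt c ^+ 2 = c by rewrite sqr_sqrtr.
have := H (Num.sqrt c / Num.sqrt a) (divr_gt0 sc sa).
set t := Num.sqrt c / Num.sqrt a.
have e1 : t ^+ 2 * a = c.
  by rewrite /t expr_div_n ea divfK ?gt_eqF.
have e2 : t * Num.sqrt a = Num.sqrt c by rewrite /t divfK ?gt_eqF.
rewrite e1 => h.
have tp : 0 < t by rewrite divr_gt0.
have : t * b <= t * (Num.sqrt a * Num.sqrt c).
  rewrite mulrA e2 -expr2 ec; lra.
by rewrite ler_pM2l.
Qed.


Lemma tr11 (N : 'M[R]_1) : N 0 0 = (N^T) 0 0.
Proof. by rewrite [RHS]mxE. Qed.

Definition bf k (M : 'M[R]_k) (y x : 'cV[R]_k) : R := (y^T *m M *m x) 0 0.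
Definition ip k (y x : 'cV[R]_k) : R := (y^T *m x) 0 0.

Lemma bf_sym k (M : 'M[R]_k) x y : M^T = M -> bf M x y = bf M y x.
Proof.
move=> sM; rewrite /bf.
have tE : forall N : 'M[R]_1, N 0 0 = (N^T) 0 0 by move=> N; rewrite [RHS]mxE.
by rewrite [RHS]tE !trmx_mul trmxK sM !mulmxA.
Qed.

Lemma bf_expand k (M : 'M[R]_k) y x t : M^T = M ->
  bf M (t *: y - x) (t *: y - x) = t ^+ 2 * bf M y y - 2 * t * bf M y x + bf M x x.
Proof.
move=> sM.
have e : bf M x y = bf M y x by apply: bf_sym.
rewrite /bf in e *.
have -> : (t *: y - x)^T = t *: y^T - x^T by rewrite linearB linearZ.
move: e; rewrite !mulmxBl !mulmxBr -!scalemxAl -!scalemxAr.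
rewrite !mxE => e; rewrite e; ring.
Qed.

Lemma psd_cs k (M : 'M[R]_k) y x : M^T = M -> (forall z, 0 <= bf M z z) ->
  bf M y x <= Num.sqrt (bf M y y) * Num.sqrt (bf M x x).
Proof.
move=> sM pM; apply: gen_cs => // t t0.
have := pM (t *: y - x); rewrite bf_expand //; lra.
Qed.

Lemma ip_bf k (y x : 'cV[R]_k) : ip y x = bf 1%:M y x.
Proof. by rewrite /ip /bf mulmx1. Qed.

Lemma ip_sum k (y x : 'cV[R]_k) : ip y x = \sum_i y i 0 * x i 0.
Proof. by rewrite /ip mxE; apply: eq_bigr => i _; rewrite mxE. Qed.

Lemma ip_ge0 k (x : 'cV[R]_k) : 0 <= ip x x.
Proof. by rewrite ip_sum; apply: sumr_ge0 => i _; rewrite -expr2 sqr_ge0. Qed.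

Lemma vn_def k (x : 'cV[R]_k) : vnorm2 x = Num.sqrt (ip x x).
Proof. by rewrite /vnorm2 ip_sum; congr Num.sqrt; apply: eq_bigr => i _; rewrite expr2. Qed.

Lemma vn_ge0 k (x : 'cV[R]_k) : 0 <= vnorm2 x.
Proof. by rewrite vn_def sqrtr_ge0. Qed.

Lemma vn_sq k (x : 'cV[R]_k) : vnorm2 x ^+ 2 = ip x x.
Proof. by rewrite vn_def sqr_sqrtr // ip_ge0. Qed.

Lemma cs k (y x : 'cV[R]_k) : ip y x <= vnorm2 y * vnorm2 x.
Proof.
rewrite !vn_def !ip_bf; apply: psd_cs; first by rewrite trmx1.
by move=> z; rewrite -ip_bf ip_ge0.
Qed.

Lemma vn_eq0 k (x : 'cV[R]_k) : vnorm2 x = 0 -> x = 0.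
Proof.
move=> /eqP; rewrite vn_def sqrtr_eq0 => h.
have h0 : ip x x = 0 by apply/eqP; rewrite eq_le h ip_ge0.
move: h0; rewrite ip_sum => /psumr_eq0P h1.
apply/matrixP => i j; rewrite ord1 mxE; apply/eqP; rewrite -sqrf_eq0 expr2.
by rewrite h1 // => l _; rewrite -expr2 sqr_ge0.
Qed.

Lemma vn0 k : vnorm2 (0 : 'cV[R]_k) = 0.
Proof. by rewrite vn_def /ip trmx0 mul0mx mxE sqrtr0. Qed.

Lemma vn_add k (x y : 'cV[R]_k) : vnorm2 (x + y) <= vnorm2 x + vnorm2 y.
Proof.
rewrite -ler_sqr ?nnegrE ?addr_ge0 ?vn_ge0 //.
rewrite vn_sq sqrrD !vn_sq.
have := cs x y.
have e : ip y x = ip x y by rewrite !ip_bf bf_sym // trmx1.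
move: e; rewrite /ip.
have -> : (x + y)^T = x^T + y^T by rewrite linearD.
rewrite !mulmxDl !mulmxDr !mxE => e; rewrite e; lra.
Qed.

Lemma vn_scale k c (x : 'cV[R]_k) : vnorm2 (c *: x) = `|c| * vnorm2 x.
Proof.
rewrite !vn_def /ip.
have -> : (c *: x)^T = c *: x^T by rewrite linearZ.
rewrite -scalemxAl -scalemxAr !mxE mulrA -expr2.
by rewrite sqrtrM ?sqr_ge0 // sqrtr_sqr.
Qed.

Lemma vn_opp k (x : 'cV[R]_k) : vnorm2 (- x) = vnorm2 x.
Proof. by rewrite -scaleN1r vn_scale normrN normr1 mul1r. Qed.

Lemma vn_coord k (x : 'cV[R]_k) i : `|x i 0| <= vnorm2 x.
Proof.
rewrite -ler_sqr ?nnegrE ?vn_ge0 // vn_sq ip_sum real_normK ?num_real //.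
rewrite (bigD1 i) //= -expr2 lerDl; apply: sumr_ge0 => l _; by rewrite -expr2 sqr_ge0.
Qed.


Lemma mx_bound p q (M : 'M[R]_(p, q)) :
  exists K, 0 <= K /\ forall x, vnorm2 (M *m x) <= K * vnorm2 x.
Proof.
pose r i := \sum_j `|M i j|.
exists (Num.sqrt (\sum_i r i ^+ 2)); split; first exact: sqrtr_ge0.
move=> x.
have hi : forall i, `|(M *m x) i 0| <= r i * vnorm2 x.
  move=> i; rewrite mxE /r mulr_suml.
  apply: le_trans (ler_norm_sum _ _ _) _.
  apply: ler_sum => j _; rewrite normrM ler_wpM2l //; exact: vn_coord.
rewrite -ler_sqr ?nnegrE ?vn_ge0 ?mulr_ge0 ?sqrtr_ge0 ?vn_ge0 //.
have e : Num.sqrt (\sum_i r i ^+ 2) ^+ 2 = \sum_i r i ^+ 2.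
  by rewrite sqr_sqrtr //; apply: sumr_ge0 => i _; rewrite sqr_ge0.
rewrite exprMn e [X in X <= _]vn_sq ip_sum mulr_suml; apply: ler_sum => i _.
rewrite -expr2 -exprMn -real_normK ?num_real //.
rewrite ler_sqr ?nnegrE ?mulr_ge0 ?vn_ge0 ?sumr_ge0 // hi.
Qed.

Definition SN p q (M : 'M[R]_(p, q)) :=
  [set e : R | exists x : 'cV[R]_q, x != 0 /\ e = vnorm2 (M *m x) / vnorm2 x].

Lemma SN_ub p q (M : 'M[R]_(p, q)) : has_ubound (SN M).
Proof.
have [K [K0 HK]] := mx_bound M.
exists K => e [x [x0 ->]].
have xp : 0 < vnorm2 x.
  rewrite lt_neqAle vn_ge0 andbT eq_sym; apply/negP => /eqP/vn_eq0 h.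
  by rewrite h eqxx in x0.
by rewrite ler_pdivrMr.
Qed.

Lemma sn_ub p q (M : 'M[R]_(p, q)) x : vnorm2 (M *m x) <= specnorm M * vnorm2 x.
Proof.
have [->|x0] := eqVneq x 0; first by rewrite mulmx0 !vn0 mulr0.
have xp : 0 < vnorm2 x.
  rewrite lt_neqAle vn_ge0 andbT eq_sym; apply/negP => /eqP/vn_eq0 h.
  by rewrite h eqxx in x0.
rewrite -ler_pdivrMr //; apply: (ub_le_sup (SN_ub M)).
by exists x.
Qed.

Lemma sn_le p q (M : 'M[R]_(p, q)) c : 0 <= c ->
  (forall x, vnorm2 (M *m x) <= c * vnorm2 x) -> specnorm M <= c.
Proof.
move=> c0 H; rewrite /specnorm.
have [ne|e] := pselect (SN M !=set0).
  apply: ge_sup => // e [x [x0 ->]].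
  have xp : 0 < vnorm2 x.
    rewrite lt_neqAle vn_ge0 andbT eq_sym; apply/negP => /eqP/vn_eq0 h.
    by rewrite h eqxx in x0.
  by rewrite ler_pdivrMr.
rewrite sup_out //; by case.
Qed.

Lemma sn_ge0 p q (M : 'M[R]_(p, q)) : 0 <= specnorm M.
Proof.
rewrite /specnorm.
have [[e He]|e] := pselect (SN M !=set0).
  apply: le_trans (ub_le_sup (SN_ub M) He).
  case: He => x [_ ->]; by rewrite divr_ge0 ?vn_ge0.
by rewrite sup_out //; case.
Qed.

Lemma sn_mul p q r (M : 'M[R]_(p, q)) (N : 'M[R]_(q, r)) :
  specnorm (M *m N) <= specnorm M * specnorm N.
Proof.
apply: sn_le; first by rewrite mulr_ge0 ?sn_ge0.
move=> x; rewrite -mulmxA; apply: le_trans (sn_ub _ _) _.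
by rewrite -mulrA ler_wpM2l ?sn_ge0 ?sn_ub.
Qed.

Lemma sn_add p q (M N : 'M[R]_(p, q)) :
  specnorm (M + N) <= specnorm M + specnorm N.
Proof.
apply: sn_le; first by rewrite addr_ge0 ?sn_ge0.
move=> x; rewrite mulmxDl; apply: le_trans (vn_add _ _) _.
by rewrite mulrDl lerD ?sn_ub.
Qed.

Lemma sn_opp p q (M : 'M[R]_(p, q)) : specnorm (- M) <= specnorm M.
Proof.
apply: sn_le; first exact: sn_ge0.
by move=> x; rewrite mulNmx vn_opp sn_ub.
Qed.

Lemma sn_sub p q (M N : 'M[R]_(p, q)) :
  specnorm (M - N) <= specnorm M + specnorm N.
Proof.
apply: le_trans (sn_add _ _) _; by rewrite lerD2l sn_opp.
Qed.

Lemma ip_tr p q (M : 'M[R]_(p, q)) y x : ip y (M *m x) = ip (M^T *m y) x.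
Proof. by rewrite /ip trmx_mul trmxK mulmxA. Qed.

Lemma sn_tr p q (M : 'M[R]_(p, q)) : specnorm M^T <= specnorm M.
Proof.
apply: sn_le; first exact: sn_ge0.
move=> y.
have h : vnorm2 (M^T *m y) ^+ 2 <= specnorm M * vnorm2 (M^T *m y) * vnorm2 y.
  rewrite vn_sq -ip_tr; apply: le_trans (cs _ _) _.
  rewrite mulrC; apply: ler_wpM2r; first exact: vn_ge0.
  exact: sn_ub.
have [z|zp] := eqVneq (vnorm2 (M^T *m y)) 0.
  by rewrite z mulr_ge0 ?sn_ge0 ?vn_ge0.
have zpos : 0 < vnorm2 (M^T *m y) by rewrite lt_neqAle eq_sym zp vn_ge0.
move: h; rewrite expr2 -mulrA [specnorm M * _]mulrC -mulrA ler_pM2l //.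
by rewrite mulrC.
Qed.


Lemma bf_ip k (N : 'M[R]_k) y x : bf N y x = ip y (N *m x).
Proof. by rewrite /bf /ip mulmxA. Qed.

Lemma bf_le_sn k (N : 'M[R]_k) z : bf N z z <= specnorm N * vnorm2 z ^+ 2.
Proof.
rewrite bf_ip; apply: le_trans (cs _ _) _.
by rewrite expr2 mulrA [specnorm N * _]mulrC -mulrA ler_wpM2l ?vn_ge0 ?sn_ub.
Qed.

Lemma sqrt_bound (a s v : R) : 0 <= s -> 0 <= v -> a <= s * v ^+ 2 ->
  Num.sqrt a <= Num.sqrt s * v.
Proof.
move=> s0 v0 h; rewrite -(ger0_norm v0) -sqrtr_sqr -sqrtrM //.
by rewrite ler_sqrt // mulr_ge0 ?sqr_ge0.
Qed.

Lemma sn_psd_mono k (M N : 'M[R]_k) : M^T = M ->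
  (forall z, 0 <= bf M z z) -> (forall z, bf M z z <= bf N z z) ->
  specnorm M <= specnorm N.
Proof.
move=> sM pM le; apply: sn_le; first exact: sn_ge0.
move=> x; set y := M *m x.
have sN := sn_ge0 N.
have h1 : vnorm2 y ^+ 2 <= Num.sqrt (specnorm N) * vnorm2 y * (Num.sqrt (specnorm N) * vnorm2 x).
  rewrite vn_sq /y -bf_ip; apply: le_trans (psd_cs _ _ sM pM) _.
  apply: ler_pM; rewrite ?sqrtr_ge0 //; apply: sqrt_bound; rewrite ?vn_ge0 //;
    exact: le_trans (le _) (bf_le_sn _ _).
have e : Num.sqrt (specnorm N) * vnorm2 y * (Num.sqrt (specnorm N) * vnorm2 x)
  = vnorm2 y * (Num.sqrt (specnorm N) ^+ 2 * vnorm2 x) by ring.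
move: h1; rewrite e sqr_sqrtr // expr2.
have [z|zp] := eqVneq (vnorm2 y) 0.
  by rewrite z mulr_ge0 ?vn_ge0.
have zpos : 0 < vnorm2 y by rewrite lt_neqAle eq_sym zp vn_ge0.
by rewrite ler_pM2l.
Qed.


Lemma pd_unit k (M : 'M[R]_k) : (forall x, x != 0 -> 0 < bf M x x) -> M \in unitmx.
Proof.
move=> pM; rewrite unitmxE unitfE; apply/negP => /det0P [v v0 vM].
have x0 : v^T != 0 by apply: contra v0 => /eqP h; rewrite -(trmxK v) h trmx0.
have := pM _ x0; rewrite /bf trmxK vM mul0mx mxE ltxx //.
Qed.

Lemma inv_sym k (M : 'M[R]_k) : M^T = M -> (invmx M)^T = invmx M.
Proof. by move=> sM; rewrite trmx_inv sM. Qed.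

Lemma ip_mull k (A : 'M[R]_k) y x : ip (A *m y) x = bf A^T y x.
Proof. by rewrite /ip /bf trmx_mul. Qed.

Lemma bf_sub k (M : 'M[R]_k) z w : M^T = M ->
  bf M (z - w) (z - w) = bf M z z - 2 * bf M z w + bf M w w.
Proof. by move=> sM; have := bf_expand z w 1 sM; rewrite scale1r expr1n mul1r mulr1. Qed.

Lemma bf_inv_r k (M : 'M[R]_k) z y : M \in unitmx -> bf M z (invmx M *m y) = ip z y.
Proof. by move=> u; rewrite /bf /ip !mulmxA -[z^T *m M *m invmx M]mulmxA mulmxV // mulmx1. Qed.

Lemma quad_inv_var k (M : 'M[R]_k) z y : M^T = M -> M \in unitmx ->
  (forall v, 0 <= bf M v v) ->
  2 * ip z y - bf M z z <= bf (invmx M) y y.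
Proof.
move=> sM u pM.
have := pM (z - invmx M *m y); rewrite bf_sub // bf_inv_r //.
rewrite bf_inv_r // ip_mull inv_sym //; lra.
Qed.

Lemma inv_antitone k (M D : 'M[R]_k) y : M^T = M -> D^T = D ->
  M \in unitmx -> (M + D) \in unitmx ->
  (forall v, 0 <= bf M v v) -> (forall v, 0 <= bf D v v) ->
  bf (invmx (M + D)) y y <= bf (invmx M) y y.
Proof.
move=> sM sD uM uN pM pD.
set z := invmx (M + D) *m y.
have := quad_inv_var z y sM uM pM.
have sN : (M + D)^T = M + D by rewrite linearD /= sM sD.
have e1 : ip z y = bf (invmx (M + D)) y y by rewrite /z ip_mull inv_sym.
have e2 : bf (M + D) z z = ip z y by rewrite /z bf_inv_r.
have e3 : bf (M + D) z z = bf M z z + bf D z z.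
  by rewrite /bf mulmxDr mulmxDl mxE.
have := pD z; lra.
Qed.


Lemma mxE_add p q (M N : 'M[R]_(p, q)) i j : (M + N) i j = M i j + N i j.
Proof. by rewrite mxE. Qed.
Lemma mxE_opp p q (M : 'M[R]_(p, q)) i j : (- M) i j = - M i j.
Proof. by rewrite mxE. Qed.

Lemma quad_H k l (G : 'M[R]_(l, k)) (K : 'M[R]_(l, k)) (Mp X : 'M[R]_l) :
  X *m Mp = 1%:M -> Mp *m X = 1%:M ->
  (G^T - K^T *m Mp) *m X *m (G - Mp *m K) =
  G^T *m X *m G - G^T *m K - K^T *m G + K^T *m Mp *m K.
Proof.
move=> h1 h2.
rewrite !mulmxBl !mulmxBr.
have e1 : G^T *m X *m (Mp *m K) = G^T *m K.
  by rewrite mulmxA -(mulmxA G^T) h1 mulmx1.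
have e2 : K^T *m Mp *m X *m G = K^T *m G.
  by rewrite -(mulmxA K^T) h2 mulmx1.
have e3 : K^T *m Mp *m X *m (Mp *m K) = K^T *m Mp *m K.
  by rewrite -(mulmxA K^T) h2 mulmx1 mulmxA.
rewrite e1 e2 e3; apply/matrixP => i j; rewrite !(mxE_add, mxE_opp); lra.
Qed.


Lemma ric_diff k l (A : 'M[R]_k) (B : 'M[R]_(k, l)) (Rm : 'M[R]_l) (P Ps S : 'M[R]_k) :
  P^T = P -> Ps^T = Ps -> Rm^T = Rm ->
  (Rm + B^T *m P *m B) \in unitmx -> (Rm + B^T *m Ps *m B) \in unitmx ->
  riccati A B Rm P S - riccati A B Rm Ps S =
  (A - B *m gain A B Rm Ps)^T *m (P - Ps) *m (A - B *m gain A B Rm Ps)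
  - (A - B *m gain A B Rm Ps)^T *m (P - Ps) *m B *m invmx (Rm + B^T *m P *m B)
    *m B^T *m (P - Ps) *m (A - B *m gain A B Rm Ps).
Proof.
move=> sP sPs sRm uP uPs.
rewrite /riccati.
set Mp := Rm + B^T *m P *m B.
set Ms := Rm + B^T *m Ps *m B.
set X := invmx Mp.
have r1 : A^T *m Ps *m B *m invmx Ms *m B^T *m Ps *m A = A^T *m Ps *m B *m gain A B Rm Ps.
  by rewrite /gain -/Ms !mulmxA.
rewrite r1.
set K := gain A B Rm Ps.
have hK : Ms *m K = B^T *m Ps *m A.
  by rewrite /K /gain -/Ms !mulmxA mulmxV // mul1mx.
clearbody K.
have sMp : Mp^T = Mp by rewrite /Mp linearD /= sRm !trmx_mul trmxK sP mulmxA.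
have hXM : X *m Mp = 1%:M by rewrite /X mulVmx.
have hMX : Mp *m X = 1%:M by rewrite /X mulmxV.
clearbody X.
have hK' : B^T *m Ps *m A = Rm *m K + B^T *m Ps *m B *m K.
  by rewrite -hK /Ms mulmxDl.
set As := A - B *m K.
have hH : B^T *m (P - Ps) *m As = B^T *m P *m A - Mp *m K.
  rewrite /As /Mp !(mulmxBr, mulmxBl) !mulmxA hK' mulmxDl ?mulmxA.
  apply/matrixP => i j; rewrite !(mxE_add, mxE_opp); lra.
have hHT : As^T *m (P - Ps) *m B = (B^T *m P *m A)^T - K^T *m Mp.
  have tPs : (P - Ps)^T = P - Ps by rewrite linearB /= sP sPs.
  have tR : (B^T *m P *m A - Mp *m K)^T = (B^T *m P *m A)^T - K^T *m Mp.
    by rewrite linearB /= (trmx_mul Mp) sMp.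
  have := congr1 trmx hH; rewrite tR !trmx_mul trmxK tPs.
  by rewrite !mulmxA.
have e2 : As^T *m (P - Ps) *m B *m X *m B^T *m (P - Ps) *m As
   = ((B^T *m P *m A)^T - K^T *m Mp) *m X *m (B^T *m P *m A - Mp *m K).
  by rewrite -hH -hHT !mulmxA.
rewrite e2 quad_H //.
have eG : (B^T *m P *m A)^T = A^T *m P *m B by rewrite !trmx_mul trmxK sP mulmxA.
rewrite eG.
have eAs : As^T = A^T - K^T *m B^T by rewrite /As linearB /= trmx_mul.
rewrite eAs /As !(mulmxBr, mulmxBl) !mulmxA.
have t1 : K^T *m B^T *m Ps *m A = K^T *m Rm *m K + K^T *m B^T *m Ps *m B *m K.
  have -> : K^T *m B^T *m Ps *m A = K^T *m (B^T *m Ps *m A) by rewrite !mulmxA.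
  by rewrite hK' mulmxDr !mulmxA.
have t2 : A^T *m Ps *m B *m K = K^T *m Rm *m K + K^T *m B^T *m Ps *m B *m K.
  have := congr1 trmx t1; rewrite !trmx_mul !trmxK linearD /= !trmx_mul !trmxK sPs sRm.
  by rewrite !mulmxA => <-.
have t3 : K^T *m Mp *m K = K^T *m Rm *m K + K^T *m B^T *m P *m B *m K.
  by rewrite /Mp mulmxDr mulmxDl !mulmxA.
rewrite t1 t2 t3.
apply/matrixP => i j; rewrite !(mxE_add, mxE_opp); lra.
Qed.


Lemma trD p q (M N : 'M[R]_(p, q)) : (M + N)^T = M^T + N^T.
Proof. by apply/matrixP => i j; rewrite !mxE. Qed.
Lemma trB p q (M N : 'M[R]_(p, q)) : (M - N)^T = M^T - N^T.
Proof. by apply/matrixP => i j; rewrite !mxE. Qed.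

Lemma bfD k (M N : 'M[R]_k) x : bf (M + N) x x = bf M x x + bf N x x.
Proof. by rewrite /bf mulmxDr mulmxDl mxE_add. Qed.
Lemma bfB k (M N : 'M[R]_k) x : bf (M - N) x x = bf M x x - bf N x x.
Proof. by rewrite /bf mulmxBr mulmxBl mxE_add mxE_opp. Qed.

Lemma Mp_sym k l (B : 'M[R]_(k, l)) (Rm : 'M[R]_l) (P : 'M[R]_k) :
  P^T = P -> Rm^T = Rm -> (Rm + B^T *m P *m B)^T = Rm + B^T *m P *m B.
Proof. by move=> sP sRm; rewrite trD sRm !trmx_mul trmxK sP mulmxA. Qed.

Lemma bf_Mp k l (B : 'M[R]_(k, l)) (Rm : 'M[R]_l) (P : 'M[R]_k) y :
  bf (Rm + B^T *m P *m B) y y = bf Rm y y + bf P (B *m y) (B *m y).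
Proof. by rewrite bfD /bf trmx_mul !mulmxA. Qed.

Lemma Mp_unit k l (B : 'M[R]_(k, l)) (Rm : 'M[R]_l) (P : 'M[R]_k) :
  (forall z, 0 <= bf P z z) -> (forall y, y != 0 -> 0 < bf Rm y y) ->
  (Rm + B^T *m P *m B) \in unitmx.
Proof.
move=> pP pR; apply: pd_unit => y y0; rewrite bf_Mp.
by apply: ltr_wpDr; [exact: pP | exact: pR].
Qed.

Lemma ric_sym k l (A : 'M[R]_k) (B : 'M[R]_(k, l)) (Rm : 'M[R]_l) (P S : 'M[R]_k) :
  P^T = P -> Rm^T = Rm -> S^T = S -> (riccati A B Rm P S)^T = riccati A B Rm P S.
Proof.
move=> sP sRm sS; rewrite /riccati trD trB sS !trmx_mul !trmxK trmx_inv Mp_sym //.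
by rewrite sP !mulmxA.
Qed.

Lemma ric_psd k l (A : 'M[R]_k) (B : 'M[R]_(k, l)) (Rm : 'M[R]_l) (P S : 'M[R]_k) :
  P^T = P -> Rm^T = Rm -> (forall z, 0 <= bf P z z) -> (forall z, 0 <= bf Rm z z) ->
  (Rm + B^T *m P *m B) \in unitmx -> (forall z, 0 <= bf S z z) ->
  forall x, 0 <= bf (riccati A B Rm P S) x x.
Proof.
move=> sP sRm pP pR u pS x.
rewrite /riccati bfD bfB.
set Mp := Rm + B^T *m P *m B.
set X := invmx Mp.
set v := A *m x.
set g := B^T *m P *m v.
have e1 : bf (A^T *m P *m A) x x = bf P v v by rewrite /bf /v trmx_mul !mulmxA.
have gT : g^T = v^T *m P *m B by rewrite /g !trmx_mul trmxK sP mulmxA.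
have e2 : bf (A^T *m P *m B *m X *m B^T *m P *m A) x x = bf X g g.
  by rewrite /bf gT /g /v trmx_mul !mulmxA.
have e3 : bf P v (B *m (X *m g)) = bf X g g by rewrite /bf gT !mulmxA.
have sX : X^T = X by rewrite /X inv_sym // Mp_sym.
have e4 : bf Mp (X *m g) (X *m g) = bf X g g.
  rewrite /bf trmx_mul sX !mulmxA -(mulmxA (g^T *m X)) /X mulmxV // mulmx1.
  by rewrite -/X.
have h1 := pP (v - B *m (X *m g)).
rewrite bf_sub // e3 in h1.
have := bf_Mp B Rm P (X *m g); rewrite -/Mp e4 => e5.
have := pR (X *m g); have := pS x.
rewrite e1 e2; lra.
Qed.


Lemma bf_BYBt k l (B : 'M[R]_(k, l)) (Y : 'M[R]_l) z :
  bf (B *m Y *m B^T) z z = bf Y (B^T *m z) (B^T *m z).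
Proof. by rewrite /bf trmx_mul trmxK !mulmxA. Qed.

Lemma geo (q : R) n : \sum_(k < n) q ^+ k * (1 - q) = 1 - q ^+ n.
Proof.
elim: n => [|n IH]; first by rewrite big_ord0 expr0 subrr.
by rewrite big_ord_recr /= IH exprSr; ring.
Qed.

Lemma sn_mul5 k (M1 M2 M3 M4 M5 : 'M[R]_k) :
  specnorm (M1 *m M2 *m M3 *m M4 *m M5) <=
  specnorm M1 * specnorm M2 * specnorm M3 * specnorm M4 * specnorm M5.
Proof.
apply: le_trans (sn_mul _ _) _; rewrite ler_wpM2r ?sn_ge0 //.
apply: le_trans (sn_mul _ _) _; rewrite ler_wpM2r ?sn_ge0 //.
apply: le_trans (sn_mul _ _) _; rewrite ler_wpM2r ?sn_ge0 //.
exact: sn_mul.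
Qed.

Lemma sn_mul3 k (M1 M2 M3 : 'M[R]_k) :
  specnorm (M1 *m M2 *m M3) <= specnorm M1 * specnorm M2 * specnorm M3.
Proof.
apply: le_trans (sn_mul _ _) _; rewrite ler_wpM2r ?sn_ge0 //.
exact: sn_mul.
Qed.

Lemma pd_psd k (M : 'M[R]_k) : pd M -> forall z, 0 <= bf M z z.
Proof.
case=> _ h z; have [->|z0] := eqVneq z 0; first by rewrite /bf mulmx0 mxE.
exact/ltW/h.
Qed.


Lemma inv_psd k (M : 'M[R]_k) : M^T = M -> M \in unitmx -> (forall z, 0 <= bf M z z) ->
  forall y, 0 <= bf (invmx M) y y.
Proof.
move=> sM u pM y; have := pM (invmx M *m y).
by rewrite bf_inv_r // ip_mull inv_sym.
Qed.

Lemma le_of_eq (x y : R) : x = y -> x <= y. Proof. by move->. Qed.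

End Aux.

Lemma nat_e i k : (k < i.+1)%N -> (i.+1 + 0 - k.+1 + (k + k) = i + k)%N.
Proof. move=> h; lia. Qed.

Unset Implicit Arguments.

Theorem lemma10 (R : realType) (n m : nat)
  (A : 'M[R]_n.+1) (B : 'M[R]_(n.+1, m.+1)) (S : 'M[R]_n.+1) (Rm : 'M[R]_m.+1)
  (hS : pd S) (hR : pd Rm) (hstab : stabilizable A B)
  (Pstar : 'M[R]_n.+1) (hPstar : pd Pstar) (hric : Pstar = riccati A B Rm Pstar S)
  (P0 : 'M[R]_n.+1) (hP0 : psd P0)
  (theta C : R)
  (htheta1 : specrad (A - B *m gain A B Rm Pstar) < theta) (htheta2 : theta < 1)
  (hC1 : 1 <= C)
  (hC : forall i : nat, specnorm ((A - B *m gain A B Rm Pstar) ^+ i) <= C * theta ^+ i)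
  (hnu : 0 < specnorm (A - B *m gain A B Rm Pstar) ^+ 2 * specnorm (B *m invmx Rm *m B^T))
  (hclose : specnorm (P0 - Pstar) <=
     theta ^+ 2 * (1 - theta ^+ 2) /
     (4 * (specnorm (A - B *m gain A B Rm Pstar) ^+ 2 * specnorm (B *m invmx Rm *m B^T))
        * C ^+ 4)) :
  forall i : nat,
    specnorm (value_iter A B Rm S P0 i - Pstar) <=
      2 * C ^+ 2 * theta ^+ (2 * i) * specnorm (P0 - Pstar).
Proof.
set As := A - B *m gain A B Rm Pstar in htheta1 hC hnu hclose *.
set nu := specnorm As ^+ 2 * specnorm (B *m invmx Rm *m B^T) in hnu hclose.
have [sS _] := hS; have [sR pR] := hR; have [sPs _] := hPstar.
have psdS := pd_psd hS; have psdR := pd_psd hR; have psdPs := pd_psd hPstar.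
set P := value_iter A B Rm S P0.
have hPi : forall i, (P i)^T = P i /\ forall z, 0 <= bf (P i) z z.
  elim => [|i [s p]]; first by case: hP0.
  have u : (Rm + B^T *m P i *m B) \in unitmx by apply: Mp_unit.
  split; first exact: ric_sym.
  exact: ric_psd.
have hU : forall i, (Rm + B^T *m P i *m B) \in unitmx.
  by move=> i; apply: Mp_unit => //; case: (hPi i).
have hUs : (Rm + B^T *m Pstar *m B) \in unitmx by apply: Mp_unit.
pose X i := invmx (Rm + B^T *m P i *m B).
pose E i := As^T *m (P i - Pstar) *m B *m X i *m B^T *m (P i - Pstar) *m As.
have hstep : forall i, P i.+1 - Pstar = As^T *m (P i - Pstar) *m As - E i.
  move=> i.
  have hr : riccati A B Rm Pstar S = Pstar by rewrite -hric.
  have -> : P i.+1 - Pstar = riccati A B Rm (P i) S - riccati A B Rm Pstar S.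
    by rewrite hr.
  by rewrite ric_diff //; case: (hPi i).
set d := fun i => specnorm (P i - Pstar).
have hE : forall i, specnorm (E i) <= nu * d i ^+ 2.
  move=> i; have [sP pP] := hPi i.
  have eE : E i = As^T *m (P i - Pstar) *m (B *m X i *m B^T) *m (P i - Pstar) *m As.
    by rewrite /E !mulmxA.
  have sMp := Mp_sym B sP sR.
  have hBX : specnorm (B *m X i *m B^T) <= specnorm (B *m invmx Rm *m B^T).
    apply: sn_psd_mono.
    - by rewrite !trmx_mul trmxK /X inv_sym // mulmxA.
    - move=> z; rewrite bf_BYBt; apply: inv_psd => // v.
      by rewrite bf_Mp addr_ge0.
    - move=> z; rewrite !bf_BYBt; apply: inv_antitone => //.
      + by rewrite !trmx_mul trmxK sP mulmxA.
      + exact: pd_unit (proj2 hR).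
      + by move=> v; have := pP (B *m v); rewrite /bf trmx_mul !mulmxA.
  rewrite eE; apply: le_trans (sn_mul5 _ _ _ _ _) _.
  have e : nu * d i ^+ 2 = specnorm As * d i * specnorm (B *m invmx Rm *m B^T) * d i * specnorm As.
    by rewrite /nu; ring.
  rewrite e; have h0 := sn_ge0.
  apply: ler_pM; rewrite ?mulr_ge0 ?h0 //.
  apply: ler_pM; rewrite ?mulr_ge0 ?h0 //.
  apply: ler_pM; rewrite ?mulr_ge0 ?h0 //.
  apply: ler_pM; rewrite ?mulr_ge0 ?h0 //.
  exact: sn_tr.
have Asp : 0 < specnorm As.
  have hnu' : 0 < specnorm As ^+ 2 * specnorm (B *m invmx Rm *m B^T) by [].
  rewrite lt_neqAle sn_ge0 andbT eq_sym; apply: contraTneq hnu' => ->.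
  by rewrite expr0n mul0r ltxx.
have th0 : 0 < theta.
  have := hC 1; rewrite expr1 => h.
  have h2 : 0 < C * theta by apply: lt_le_trans h.
  have C0 : 0 < C by apply: lt_le_trans hC1.
  by rewrite pmulr_rgt0 in h2.
set q := theta ^+ 2 in hclose *.
have q0 : 0 < q by rewrite /q exprn_gt0.
have q1 : q < 1 by rewrite /q expr2; nra.
have C0 : 0 < C by apply: lt_le_trans hC1.
have nu0 : 0 < nu by [].
have d00 : 0 <= d 0 by exact: sn_ge0.
pose Lj j (Y : 'M[R]_n.+1) := (As ^+ j)^T *m Y *m As ^+ j.
have hLn : forall j Y, specnorm (Lj j Y) <= C ^+ 2 * q ^+ j * specnorm Y.
  move=> j Y; apply: le_trans (sn_mul3 _ _ _) _.
  have h1 := hC j; have h2 := sn_tr (As ^+ j).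
  have e : C ^+ 2 * q ^+ j * specnorm Y = C * theta ^+ j * specnorm Y * (C * theta ^+ j).
    by rewrite /q exprAC; ring.
  rewrite e; apply: ler_pM; rewrite ?mulr_ge0 ?sn_ge0 //.
  apply: ler_pM; rewrite ?mulr_ge0 ?sn_ge0 //.
  exact: le_trans h2 h1.
have hLB : forall j Y Z, Lj j (Y - Z) = Lj j Y - Lj j Z.
  by move=> j Y Z; rewrite /Lj mulmxBr mulmxBl.
have hLS : forall j Y, Lj j (As^T *m Y *m As) = Lj j.+1 Y.
  move=> j Y; rewrite /Lj exprS -mulmxE trmx_mul !mulmxA.
  by rewrite -(mulmxA _ As (As ^+ j)).
pose F i j := C ^+ 2 * q ^+ (i + j) * d 0 +
  \sum_(k < i) C ^+ 2 * q ^+ (i + j - k.+1) * (nu * d k ^+ 2).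
have hmain : forall i j, specnorm (Lj j (P i - Pstar)) <= F i j.
  elim => [|i IH] j.
    by rewrite /F big_ord0 addr0 add0n; apply: hLn.
  rewrite hstep hLB hLS; apply: le_trans (sn_sub _ _) _.
  have h1 := IH j.+1.
  have h2 : specnorm (Lj j (E i)) <= C ^+ 2 * q ^+ j * (nu * d i ^+ 2).
    apply: le_trans (hLn _ _) _; apply: ler_wpM2l; last exact: hE.
    by rewrite mulr_ge0 // exprn_ge0 // ltW.
  have e : F i.+1 j = F i j.+1 + C ^+ 2 * q ^+ j * (nu * d i ^+ 2).
    rewrite /F big_ord_recr /=.
    have ej : (i.+1 + j - i.+1 = j)%N by rewrite addKn.
    rewrite ej addSnnS; ring.
  apply: le_trans (lerD h1 h2) _; rewrite -e; exact: lexx.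
have hL0 : forall Y, Lj 0%N Y = Y by move=> Y; rewrite /Lj expr0 trmx1 mulmx1 mul1mx.
have den : 0 < 4 * nu * C ^+ 4.
  by apply: mulr_gt0; [apply: mulr_gt0 | exact: exprn_gt0].
have ha : 4 * nu * C ^+ 4 * d 0 <= q * (1 - q).
  have hc : d 0 <= q * (1 - q) / (4 * nu * C ^+ 4) by [].
  by move: hc; rewrite ler_pdivlMr // mulrC.
pose bnd k := 2 * C ^+ 2 * q ^+ k * d 0.
have hkey : forall i, (forall k, (k < i)%N -> d k <= bnd k) -> d i <= bnd i.
  move=> i IH.
  have h := hmain i 0%N; rewrite hL0 in h.
  have h' : d i <= F i 0%N by [].
  case: i IH h h' => [|i] IH _ h.
    move: h; rewrite /F big_ord0 addr0 expr0 /bnd expr0 mulr1 => h.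
    have : 0 <= C ^+ 2 * d 0 by rewrite mulr_ge0 ?sqr_ge0.
    lra.
  set a := 4 * nu * C ^+ 4 * d 0 in ha.
  have a0 : 0 <= a by rewrite mulr_ge0 // ltW.
  have hs : \sum_(k < i.+1) C ^+ 2 * q ^+ (i.+1 + 0 - k.+1) * (nu * d k ^+ 2)
            <= C ^+ 2 * q ^+ i.+1 * d 0.
    apply: (@le_trans _ _ (\sum_(k < i.+1) C ^+ 2 * q ^+ i * d 0 * a * q ^+ k)).
      apply: ler_sum => k _.
      have hk := IH k (ltn_ord k).
      have dk0 : 0 <= d k := sn_ge0 _.
      have hk2 : d k ^+ 2 <= bnd k ^+ 2.
        by rewrite ler_sqr ?nnegrE // (le_trans dk0 hk).
      have ko := ltn_ord k.
      have eq : q ^+ (i.+1 + 0 - k.+1) * (q ^+ k * q ^+ k) = q ^+ i * q ^+ k.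
        by rewrite -!exprD nat_e.
      apply: (@le_trans _ _ (C ^+ 2 * q ^+ (i.+1 + 0 - k.+1) * (nu * bnd k ^+ 2))).
        apply: ler_wpM2l; first by rewrite mulr_ge0 ?sqr_ge0 // exprn_ge0 // ltW.
        by apply: ler_wpM2l; [exact: ltW nu0 | exact: hk2].
      have -> : C ^+ 2 * q ^+ (i.+1 + 0 - k.+1) * (nu * bnd k ^+ 2) =
        C ^+ 2 * nu * 4 * C ^+ 4 * d 0 ^+ 2 * (q ^+ (i.+1 + 0 - k.+1) * (q ^+ k * q ^+ k)).
        by rewrite /bnd; ring.
      by rewrite eq /a; apply: le_of_eq; ring.
    rewrite -mulr_sumr.
    set G := \sum_(k < i.+1) q ^+ k.
    have hG : G * (1 - q) = 1 - q ^+ i.+1 by rewrite /G mulr_suml geo.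
    have G0 : 0 <= G by rewrite /G sumr_ge0 // => k _; rewrite exprn_ge0 // ltW.
    have qi0 : 0 <= q ^+ i.+1 by rewrite exprn_ge0 // ltW.
    have haG : a * G <= q.
      have h1 : a * G <= q * (1 - q) * G by rewrite ler_wpM2r.
      have h2 : q * (1 - q) * G = q * (1 - q ^+ i.+1) by rewrite -hG; ring.
      apply: le_trans h1 _; rewrite h2 mulrBr mulr1 lerBlDr lerDl.
      by apply: mulr_ge0 => //; exact: ltW q0.
    have qi : 0 <= q ^+ i by rewrite exprn_ge0 // ltW.
    have c0 : 0 <= C ^+ 2 * q ^+ i * d 0.
      by apply: mulr_ge0 => //; apply: mulr_ge0 => //; exact: sqr_ge0.
    have : C ^+ 2 * q ^+ i * d 0 * (a * G) <= C ^+ 2 * q ^+ i * d 0 * q.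
      apply: ler_wpM2l; first exact: c0.
      exact: haG.
    have e1 : C ^+ 2 * q ^+ i * d 0 * a * G = C ^+ 2 * q ^+ i * d 0 * (a * G) by ring.
    have e2 : C ^+ 2 * q ^+ i.+1 * d 0 = C ^+ 2 * q ^+ i * d 0 * q by rewrite [q ^+ i.+1]exprS; ring.
    by rewrite e1 e2.
  move: h; rewrite /F /bnd addn0 => h.
  apply: le_trans h _; move: hs; rewrite addn0 => hs.
  have -> : 2 * C ^+ 2 * q ^+ i.+1 * d 0 = C ^+ 2 * q ^+ i.+1 * d 0 + C ^+ 2 * q ^+ i.+1 * d 0.
    by ring.
  by rewrite lerD2l.
have hall : forall N i, (i < N)%N -> d i <= bnd i.
  elim => [//|N IHN] i; rewrite ltnS leq_eqVlt => /orP [/eqP ->|hi]; last exact: IHN.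
  by apply: hkey => k hk; apply: IHN.
move=> i; have := hall i.+1 i (ltnSn i); rewrite /bnd /q -exprM.
by [].
Qed.
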